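(* Let $a\ge 0$ and, for $x_i\in\mathbb{R}$, let $P_\pm^a(x_i)$ be the smallest $x>x_i$ at which the solution $Y_\pm$ of $y'=-ay-\sin(\pi\omega_\pm x)$, $Y_\pm(x_i)=0$, vanishes, where $\omega_+=3/2$, $\omega_-=1/2$. Let $P(x,a)=P_+^a(P_-^a(x))$, $I_-=(0,\tfrac23)$ and $\Delta(x,a)=P(x,a)-(x+4)$. Then there exists $a_l>0$ (small) such that the roots of $\Delta(x,a)=0$ define a function $x=x(a)$ for all $a\in(0,a_l)$, which satisfies $x(0)=x_0$, where $x_0\in I_-$ is a solution of $$\frac{32}{9\pi}+\frac{2x_0}{3}\cot\frac{3\pi x_0}{2}+(4-2x_0)\cot\frac{\pi x_0}{2}=0.$$
   Context: For $a=0$ the maps are $P_\pm^0(x_i)=\frac{2}{\omega_\pm}\left(1+\lfloor\omega_\pm x_i\rfloor\right)-x_i$, so that $P(x,0)=x+4$ for $x\in I_-$. The map $P(\cdot,a)$ is the return map of the piecewise system $\dot y=-ay-\sin(\pi\omega x)$ with $\omega=3/2$ for $y>0$ and $\omega=1/2$ for $y<0$, for an orbit leaving $y=0$ into $y<0$ at $x$, returning to $y=0$, then traversing $y>0$ and returning to $y=0$. *)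

(* Defs.v *)
From Stdlib Require Import Reals Lra.
From Coquelicot Require Import Coquelicot.
Open Scope R_scope.

Definition omega_plus : R := 3/2.
Definition omega_minus : R := 1/2.

Definition cot (x : R) : R := cos x / sin x.

Definition is_sol (w a xi : R) (Y : R -> R) : Prop :=
  Y xi = 0 /\ forall t, is_derive Y t (- a * Y t - sin (PI * w * t)).

(* xr = P_w^a(xi): the smallest x > xi at which the solution vanishes.
   (Relational form; the solution of the linear IVP is unique, and the
   smallest zero, when it exists, is unique.) *)
Definition Pmap (w a xi xr : R) : Prop :=
  exists Y, is_sol w a xi Y /\ xi < xr /\ Y xr = 0 /\
            forall t, xi < t < xr -> Y t <> 0.

Definition Pfull (x a y : R) : Prop :=
  exists x1, Pmap omega_minus a x x1 /\ Pmap omega_plus a x1 y.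

Definition Delta_root (x a : R) : Prop := Pfull x a (x + 4).

Definition in_Iminus (x : R) : Prop := 0 < x < 2/3.

Definition x0_equation (x0 : R) : Prop :=
  32 / (9 * PI) + (2 * x0 / 3) * cot (3 * PI * x0 / 2)
    + (4 - 2 * x0) * cot (PI * x0 / 2) = 0.

(* Main.v *)
Require Import Defs.
From Stdlib Require Import Reals Lra Ranalysis5 ClassicalEpsilon.
From Coquelicot Require Import Coquelicot.
Open Scope R_scope.

Definition wf (k a t : R) := exp (a*t) * (k*cos(k*t) - a*sin(k*t)).
Definition hf (k a z : R) := exp (-(a*z)) * (k*cos(k*z) + a*sin(k*z)).
Definition Ysol k a xi t := exp(-(a*t)) * (wf k a t - wf k a xi) / (a*a + k*k).

Lemma wf_deriv k a t : is_derive (wf k a) t (-(a*a+k*k) * exp(a*t) * sin(k*t)).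
Proof. unfold wf. auto_derive; auto. ring. Qed.

Lemma hf_deriv k a t : is_derive (hf k a) t (-(a*a+k*k) * exp(-(a*t)) * sin(k*t)).
Proof. unfold hf. auto_derive; auto. ring. Qed.

Lemma Ysol_sol w a xi : 0 < PI * w -> is_sol w a xi (Ysol (PI*w) a xi).
Proof.
  intros Hk. split.
  - unfold Ysol. rewrite Rminus_diag. field. nra.
  - intros t. unfold Ysol, wf.
    auto_derive. nra.
    assert (exp (-(a*t)) * exp (a*t) = 1) as E.
    { rewrite <- exp_plus. replace (-(a*t) + a*t) with 0 by ring. apply exp_0. }
    rewrite exp_Ropp. field. split; [apply Rgt_not_eq, exp_pos | nra].
Qed.

Lemma deriv0_const f : (forall t, is_derive f t 0) -> forall x y, f x = f y.
Proof.
  intros H x y.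
  assert (K : forall u v, u < v -> f u = f v).
  { intros u v Huv. destruct (MVT_cor2 f (fun _ => 0) u v Huv) as [c [Hc _]].
    intros c _. apply is_derive_Reals, H. lra. }
  destruct (Rtotal_order x y) as [h|[h|h]]. apply K; auto. subst; auto. symmetry; apply K; auto.
Qed.

Lemma sol_unique w a xi Y : 0 < PI * w -> is_sol w a xi Y ->
  forall t, Y t = Ysol (PI*w) a xi t.
Proof.
  intros Hk [HY0 HY] t.
  destruct (Ysol_sol w a xi Hk) as [HZ0 HZ].
  set (Z := Ysol (PI*w) a xi) in *.
  set (D := fun t => (Y t - Z t) * exp (a*t)).
  assert (HD : forall t, is_derive D t 0).
  { intro s. unfold D.
    assert (H1 : is_derive (fun t => Y t - Z t) s ((-a*Y s - sin(PI*w*s) - (-a*Z s - sin(PI*w*s))))).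
    { apply (is_derive_minus Y Z); auto. }
    assert (H2 : is_derive (fun t => exp (a*t)) s (a * exp (a*s))).
    { auto_derive; auto. ring. }
    assert (H3 := is_derive_mult _ _ _ _ _ H1 H2 (fun n m => Rmult_comm n m)).
    simpl in H3. unfold mult, plus in H3; simpl in H3.
    replace 0 with ((-a*Y s - sin(PI*w*s) - (-a*Z s - sin(PI*w*s))) * exp(a*s) + (Y s - Z s) * (a * exp (a*s))) by ring.
    exact H3. }
  assert (E := deriv0_const D HD t xi). unfold D in E.
  rewrite HY0, HZ0 in E. 
  assert (exp (a*t) > 0) by apply exp_pos.
  assert (Y t - Z t = 0) by nra. lra.
Qed.

Lemma Ysol_zero k a xi t : 0 < k -> (Ysol k a xi t = 0 <-> wf k a t = wf k a xi).
Proof.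
  intros Hk. unfold Ysol. assert (exp (-(a*t)) > 0) by apply exp_pos.
  assert (a*a+k*k > 0) by nra. split; intro H1.
  - assert (exp (- (a * t)) * (wf k a t - wf k a xi) = 0).
    { apply (Rmult_eq_compat_r (a*a+k*k)) in H1. field_simplify in H1; lra. }
    assert (wf k a t - wf k a xi = 0) by nra. lra.
  - rewrite H1, Rminus_diag. field. lra.
Qed.

Lemma Pmap_iff w a xi xr : 0 < PI * w ->
  (Pmap w a xi xr <-> xi < xr /\ wf (PI*w) a xr = wf (PI*w) a xi /\
     forall t, xi < t < xr -> wf (PI*w) a t <> wf (PI*w) a xi).
Proof.
  intros Hk. split.
  - intros [Y [HS [H1 [H2 H3]]]].
    assert (HU := sol_unique w a xi Y Hk HS).
    split; auto. split.
    + apply (Ysol_zero _ a xi xr Hk). rewrite <- HU. auto.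
    + intros t Ht E. apply (H3 t Ht). rewrite HU. apply Ysol_zero; auto.
  - intros [H1 [H2 H3]]. exists (Ysol (PI*w) a xi). split. apply Ysol_sol; auto.
    split; auto. split. apply Ysol_zero; auto.
    intros t Ht E. apply (H3 t Ht). apply Ysol_zero in E; auto.
Qed.

Lemma strict_incr f df l u : (forall x, l <= x <= u -> is_derive f x (df x)) ->
  (forall x, l < x < u -> df x > 0) -> forall x y, l <= x -> x < y -> y <= u -> f x < f y.
Proof.
  intros Hd Hp x y Hx Hxy Hy.
  destruct (MVT_cor2 f df x y Hxy) as [c [Hc Hc2]].
  intros c Hc. apply is_derive_Reals, Hd. lra.
  assert (df c > 0) by (apply Hp; lra). nra.
Qed.

Lemma strict_decr f df l u : (forall x, l <= x <= u -> is_derive f x (df x)) ->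
  (forall x, l < x < u -> df x < 0) -> forall x y, l <= x -> x < y -> y <= u -> f y < f x.
Proof.
  intros Hd Hp x y Hx Hxy Hy.
  destruct (MVT_cor2 f df x y Hxy) as [c [Hc Hc2]].
  intros c Hc. apply is_derive_Reals, Hd. lra.
  assert (df c < 0) by (apply Hp; lra). nra.
Qed.

Definition k1 := PI * omega_minus.
Definition k2 := PI * omega_plus.
Lemma k1_eq : k1 = PI / 2. Proof. unfold k1, omega_minus. field. Qed.
Lemma k2_eq : k2 = 3 * PI / 2. Proof. unfold k2, omega_plus. field. Qed.
Lemma PI_gt3 : 3 < PI. Proof. generalize PI2_3_2; lra. Qed.
Lemma k1_pos : 0 < k1. Proof. rewrite k1_eq. generalize PI_gt3; lra. Qed.
Lemma k2_pos : 0 < k2. Proof. rewrite k2_eq. generalize PI_gt3; lra. Qed.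

Lemma sin_shift y n : sin (y + 2 * INR n * PI) = sin y. Proof. apply sin_period. Qed.

Lemma S1 t : 0 < t < 2 -> sin (k1 * t) > 0.
Proof. intros. rewrite k1_eq. apply sin_gt_0; generalize PI_gt3; nra. Qed.
Lemma S2 t : 2 < t < 4 -> sin (k1 * t) < 0.
Proof. intros. rewrite k1_eq. apply sin_lt_0; generalize PI_gt3; nra. Qed.
Lemma S3 t : 10/3 < t < 4 -> sin (k2 * t) < 0.
Proof. intros. rewrite k2_eq.
  replace (3*PI/2*t) with ((3*PI/2*t - 4*PI) + 2 * INR 2 * PI) by (cbn [INR]; field).
  rewrite sin_shift. apply sin_lt_0; generalize PI_gt3; nra. Qed.
Lemma S4 t : 4 < t < 14/3 -> sin (k2 * t) > 0.
Proof. intros. rewrite k2_eq.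
  replace (3*PI/2*t) with ((3*PI/2*t - 6*PI) + 2 * INR 3 * PI) by (cbn [INR]; field).
  rewrite sin_shift. apply sin_gt_0; generalize PI_gt3; nra. Qed.
Lemma S5 t : 8/3 < t < 10/3 -> sin (k2 * t) > 0.
Proof. intros. rewrite k2_eq.
  replace (3*PI/2*t) with ((3*PI/2*t - 4*PI) + 2 * INR 2 * PI) by (cbn [INR]; field).
  rewrite sin_shift. apply sin_gt_0; generalize PI_gt3; nra. Qed.
Lemma S6 t : 0 < t < 2/3 -> sin (k2 * t) > 0.
Proof. intros. rewrite k2_eq. apply sin_gt_0; generalize PI_gt3; nra. Qed.

Lemma wf_decr k a l u : (forall t, l < t < u -> sin (k*t) > 0) ->
  forall x y, l <= x -> x < y -> y <= u -> wf k a y < wf k a x.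
Proof.
  intros Hs. apply (strict_decr _ (fun t => -(a*a+k*k) * exp(a*t) * sin(k*t))).
  intros; apply wf_deriv.
  intros t Ht. assert (sin (k*t) > 0) by auto. assert (exp (a*t) > 0) by apply exp_pos.
  assert (k <> 0). { intro; subst. rewrite Rmult_0_l, sin_0 in H; lra. }
  assert (k*k > 0) by (apply Rsqr_pos_lt; auto).
  assert (exp (a*t) * sin (k*t) > 0) by nra. nra.
Qed.

Lemma wf_incr k a l u : (forall t, l < t < u -> sin (k*t) < 0) ->
  forall x y, l <= x -> x < y -> y <= u -> wf k a x < wf k a y.
Proof.
  intros Hs. apply (strict_incr _ (fun t => -(a*a+k*k) * exp(a*t) * sin(k*t))).
  intros; apply wf_deriv.
  intros t Ht. assert (sin (k*t) < 0) by auto. assert (exp (a*t) > 0) by apply exp_pos.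
  assert (k <> 0). { intro; subst. rewrite Rmult_0_l, sin_0 in H; lra. }
  assert (k*k > 0) by (apply Rsqr_pos_lt; auto).
  assert (exp (a*t) * sin (k*t) < 0) by nra. nra.
Qed.

Lemma hf_decr k a l u : (forall t, l < t < u -> sin (k*t) > 0) ->
  forall x y, l <= x -> x < y -> y <= u -> hf k a y < hf k a x.
Proof.
  intros Hs. apply (strict_decr _ (fun t => -(a*a+k*k) * exp(-(a*t)) * sin(k*t))).
  intros; apply hf_deriv.
  intros t Ht. assert (sin (k*t) > 0) by auto. assert (exp (-(a*t)) > 0) by apply exp_pos.
  assert (k <> 0). { intro; subst. rewrite Rmult_0_l, sin_0 in H; lra. }
  assert (k*k > 0) by (apply Rsqr_pos_lt; auto).
  assert (exp (-(a*t)) * sin (k*t) > 0) by nra. nra.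
Qed.

Lemma Refl1 a z : wf k1 a (4 - z) = exp (4*a) * hf k1 a z.
Proof.
  unfold wf, hf. rewrite k1_eq.
  replace (PI/2*(4-z)) with (-(PI/2*z) + 2 * INR 1 * PI) by (cbn [INR]; field).
  rewrite cos_period, sin_shift, cos_neg, sin_neg.
  replace (a*(4-z)) with (4*a + -(a*z)) by ring. rewrite exp_plus. ring.
Qed.
Lemma Refl2 a z : wf k2 a (4 - z) = exp (4*a) * hf k2 a z.
Proof.
  unfold wf, hf. rewrite k2_eq.
  replace (3*PI/2*(4-z)) with (-(3*PI/2*z) + 2 * INR 3 * PI) by (cbn [INR]; field).
  rewrite cos_period, sin_shift, cos_neg, sin_neg.
  replace (a*(4-z)) with (4*a + -(a*z)) by ring. rewrite exp_plus. ring.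
Qed.
Lemma Refl3 a x : wf k2 a (x + 4) = exp (4*a) * wf k2 a x.
Proof.
  unfold wf. rewrite k2_eq.
  replace (3*PI/2*(x+4)) with (3*PI/2*x + 2 * INR 3 * PI) by (cbn [INR]; field).
  rewrite cos_period, sin_shift.
  replace (a*(x+4)) with (4*a + a*x) by ring. rewrite exp_plus. ring.
Qed.

Lemma exp_ub y : 0 <= y < 1 -> exp y <= 1 / (1 - y).
Proof.
  intros Hy. destruct (Req_dec y 0) as [->|Hn]. rewrite exp_0. lra.
  assert (H := exp_ineq1 (-y) ltac:(lra)).
  assert (exp y * exp (-y) = 1) by (rewrite <- exp_plus; replace (y + -y) with 0 by ring; apply exp_0).
  assert (exp y > 0) by apply exp_pos.
  apply Rmult_le_reg_r with (1 - y). lra. field_simplify; [|lra]. nra.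
Qed.

Lemma exp_lb y : 1 + y <= exp y.
Proof. destruct (Req_dec y 0) as [->|Hn]. rewrite exp_0; lra. left; apply exp_ineq1; auto. Qed.

Lemma exp_le_exp x y : x <= y -> exp x <= exp y.
Proof. intros [H|H]. left; apply exp_increasing; auto. subst; lra. Qed.

Lemma cos_PI_minus y : cos (PI - y) = - cos y.
Proof. rewrite cos_minus, cos_PI, sin_PI. ring. Qed.

Lemma cos_u_bounds : 1 - (PI/40)^2/2 <= cos (PI/40) <= 9972/10000.
Proof.
  assert (H3 := PI_gt3). assert (H4 := PI_4).
  destruct (cos_bound (PI/40) 0) as [Hl Hu]; try lra.
  replace (2 * 0 + 1)%nat with 1%nat in Hl by reflexivity.
  replace (2 * (0 + 1))%nat with 2%nat in Hu by reflexivity.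
  unfold cos_approx, cos_term in Hl, Hu. simpl in Hl, Hu.
  split. field_simplify in Hl. field_simplify. lra.
  assert (u2 : (PI/40)^2 >= 9/1600) by nra.
  assert (u4 : (PI/40)^4 <= 1/10000) by (assert (PI/40 <= 1/10) by lra; assert (0 <= PI/40) by lra;
    replace ((PI/40)^4) with (((PI/40)^2)^2) by ring; assert ((PI/40)^2 <= 1/100) by nra; nra).
  field_simplify in Hu. nra.
Qed.

Lemma N3 a x : 0 <= a <= 1/10 -> 1/3 < x < 2/3 -> exp (4*a) * hf k1 a 1 < wf k1 a x.
Proof.
  intros Ha Hx. assert (H3 := PI_gt3). assert (H4 := PI_4).
  unfold hf, wf. rewrite k1_eq. replace (a*1) with a by ring. replace (PI/2*1) with (PI/2) by ring. rewrite cos_PI2, sin_PI2.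
  assert (E : exp (4*a) * exp (-a) = exp (3*a)) by (rewrite <- exp_plus; f_equal; ring).
  assert (Hc : cos (PI/2*x) > 1/2).
  { rewrite <- cos_PI3. apply cos_decreasing_1; nra. }
  assert (Hs := SIN_bound (PI/2*x)).
  assert (He := exp_ub (3*a) ltac:(lra)).
  assert (He2 := exp_lb (a*x)).
  assert (0 < exp (3*a)) by apply exp_pos.
  assert (exp (4 * a) * (exp (- a) * (PI / 2 * 0 + a * 1)) = a * exp (3*a)) by (rewrite <- E; ring).
  rewrite H0.
  assert (a * exp (3*a) <= a / (1 - 3*a)).
  { unfold Rdiv. replace (a / (1 - 3*a)) with (a * (1/(1-3*a))) by (field; lra). apply Rmult_le_compat_l; lra. }
  assert (a / (1 - 3*a) <= 1/7 ) by (apply Rmult_le_reg_r with (1 - 3*a); [lra|]; field_simplify; lra).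
  assert (PI / 2 * cos (PI / 2 * x) - a * sin (PI / 2 * x) >= 3/4 - 1/10) by nra.
  assert (exp (a*x) >= 1) by nra.
  nra.
Qed.

Lemma N1 a x : 0 <= a <= 1/1000 -> 1/2 <= x <= 13/20 -> hf k2 a (2/3) < wf k2 a x.
Proof.
  intros Ha Hx. assert (H3 := PI_gt3). assert (H4 := PI_4).
  unfold hf, wf. rewrite k2_eq.
  replace (3*PI/2*(2/3)) with PI by field. rewrite cos_PI, sin_PI.
  assert (Hc : cos (3*PI/2*x) >= - (9972/10000)).
  { replace (3*PI/2*x) with (PI - (PI - 3*PI/2*x)) by ring. rewrite cos_PI_minus.
    assert (cos (PI - 3*PI/2*x) <= cos (PI/40)) by (apply cos_decr_1; nra).
    generalize cos_u_bounds; lra. }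
  assert (Hs := SIN_bound (3*PI/2*x)).
  set (B := 3 * PI / 2 * cos (3 * PI / 2 * x) - a * sin (3 * PI / 2 * x)).
  assert (HB : B >= - (9972/10000) * (3*PI/2) - a) by (unfold B; nra).
  assert (E1 := exp_lb (-(a*(2/3)))).
  assert (E2 := exp_ub (a*(13/20)) ltac:(nra)).
  assert (E3 : exp (a*x) <= exp (a*(13/20))) by (apply exp_le_exp; nra).
  assert (0 < exp (a*x)) by apply exp_pos.
  assert (1/(1 - a*(13/20)) <= 1 + a) by (apply Rmult_le_reg_r with (1 - a*(13/20)); [lra|]; field_simplify; nra).
  destruct (Rle_lt_dec 0 B).
  - assert (exp (- (a * (2 / 3))) > 0) by apply exp_pos. nra.
  - assert (exp (a*x) * B >= (1+a) * B) by nra.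
    nra.
Qed.

Lemma root_to_Delta a x z : 0 < a -> 1/3 < x < 2/3 -> 1/3 < z < 2/3 ->
  exp (4*a) * hf k1 a z = wf k1 a x -> hf k2 a z = wf k2 a x -> Delta_root x a.
Proof.
  intros Ha Hx Hz E1 E2. unfold Delta_root, Pfull. exists (4 - z). split.
  - apply Pmap_iff. apply k1_pos. change (PI*omega_minus) with k1.
    split. lra. split. rewrite Refl1; auto.
    intros t Ht. destruct (Rle_lt_dec t 2).
    + assert (wf k1 a t < wf k1 a x) by (apply (wf_decr k1 a 0 2); try lra; exact S1). lra.
    + assert (wf k1 a t < wf k1 a (4-z)) by (apply (wf_incr k1 a 2 4); try lra; exact S2).
      rewrite Refl1, E1 in H. lra.
  - apply Pmap_iff. apply k2_pos. change (PI*omega_plus) with k2.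
    split. lra. split. rewrite Refl3, Refl2, E2; auto.
    intros t Ht. destruct (Rle_lt_dec t 4).
    + assert (wf k2 a (4-z) < wf k2 a t) by (apply (wf_incr k2 a (10/3) 4); try lra; exact S3). lra.
    + assert (wf k2 a (x+4) < wf k2 a t) by (apply (wf_decr k2 a 4 (14/3)); try lra; exact S4).
      rewrite Refl3, <- E2, <- Refl2 in H. 
      replace (exp (4*a) * hf k2 a z) with (wf k2 a (4 - z)) in H by (rewrite Refl2; auto). lra.
Qed.

Lemma cont_of_deriv f df t : is_derive f t (df) -> continuity_pt f t.
Proof.
  intros H. apply continuity_pt_filterlim. apply (ex_derive_continuous (K := R_AbsRing) (V := R_NormedModule)). exists df; auto.
Qed.

Lemma wf_cont k a t : continuity_pt (wf k a) t.
Proof. eapply cont_of_deriv. apply wf_deriv. Qed.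

Lemma IVT_strict f l u : l < u -> (forall t, l <= t <= u -> continuity_pt f t) ->
  f l < 0 -> 0 < f u -> exists t, l < t < u /\ f t = 0.
Proof.
  intros Hlu Hc Hl Hu. destruct (IVT_interv f l u Hc Hlu Hl Hu) as [t [Ht Hf]].
  exists t. split; auto. destruct Ht as [[H1|H1] [H2|H2]]; subst; try lra.
Qed.

Lemma F1 a x : 0 < a -> 0 < x < 1 -> exp (4*a) * hf k1 a x > wf k1 a x.
Proof.
  intros Ha Hx. unfold hf, wf.
  assert (Hs : sin (k1*x) > 0) by (apply S1; lra).
  assert (Hc : cos (k1*x) > 0) by (rewrite k1_eq; apply cos_gt_0; generalize PI_gt3; nra).
  assert (H1 := k1_pos).
  assert (E : exp (4*a) * exp (-(a*x)) = exp (4*a - a*x)) by (rewrite <- exp_plus; f_equal; ring).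
  assert (exp (a*x) < exp (4*a - a*x)) by (apply exp_increasing; nra).
  assert (0 < exp (a*x)) by apply exp_pos.
  rewrite <- Rmult_assoc, E.
  assert (k1 * cos (k1*x) - a * sin (k1*x) < k1 * cos (k1*x) + a * sin (k1*x)) by nra.
  assert (0 < k1 * cos (k1*x) - a * sin (k1*x) \/ k1 * cos (k1*x) - a * sin (k1*x) <= 0) as [Hp|Hp] by lra.
  - apply Rlt_gt, Rlt_trans with (exp (4*a - a*x) * (k1 * cos (k1*x) - a * sin (k1*x))).
    apply Rmult_lt_compat_r; auto. apply Rmult_lt_compat_l; auto. apply exp_pos.
  - assert (0 < exp (4*a - a*x)) by apply exp_pos.
    assert (0 < k1 * cos (k1*x)) by (apply Rmult_lt_0_compat; lra).
    assert (0 < a * sin (k1*x)) by (apply Rmult_lt_0_compat; lra).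
    assert (0 < exp (4*a - a*x) * (k1 * cos (k1*x) + a * sin (k1*x))) by (apply Rmult_lt_0_compat; lra).
    assert (exp (a*x) * (k1 * cos (k1*x) - a * sin (k1*x)) <= 0) by (assert (0 < exp (a*x)) by apply exp_pos; nra).
    lra.
Qed.

Lemma wf2_neg a x : 0 <= a -> 1/3 < x < 2/3 -> wf k2 a x < 0.
Proof.
  intros Ha Hx. unfold wf.
  assert (Hs : sin (k2*x) > 0) by (apply S6; lra).
  assert (Hc : cos (k2*x) < 0).
  { rewrite k2_eq. apply cos_lt_0; generalize PI_gt3; nra. }
  assert (H1 := k2_pos). assert (0 < exp (a*x)) by apply exp_pos.
  assert (k2 * cos (k2*x) < 0) by (assert (0 < k2 * - cos (k2*x)) by (apply Rmult_lt_0_compat; lra); lra).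
  assert (0 <= a * sin (k2*x)) by (apply Rmult_le_pos; lra).
  assert (k2 * cos (k2 * x) - a * sin (k2 * x) < 0) by lra.
  nra.
Qed.

Lemma hf1_decr a y z : 0 <= y -> y < z -> z <= 2 -> hf k1 a z < hf k1 a y.
Proof. intros. apply (hf_decr k1 a 0 2); try lra. exact S1. Qed.
Lemma hf2_decr a y z : 0 <= y -> y < z -> z <= 2/3 -> hf k2 a z < hf k2 a y.
Proof. intros. apply (hf_decr k2 a 0 (2/3)); try lra. exact S6. Qed.

Lemma Delta_to_root a x : 0 < a <= 1/1000 -> 1/2 <= x <= 13/20 -> Delta_root x a ->
  exists z, x < z < 2/3 /\ exp (4*a) * hf k1 a z = wf k1 a x /\ hf k2 a z = wf k2 a x.
Proof.
  intros Ha Hx [x1 [P1 P2]].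
  apply Pmap_iff in P1; [|apply k1_pos]. apply Pmap_iff in P2; [|apply k2_pos].
  change (PI*omega_minus) with k1 in P1. change (PI*omega_plus) with k2 in P2.
  destruct P1 as [Q1 [Q2 Q3]]. destruct P2 as [T1 [T2 T3]].
  assert (x1 > 2).
  { destruct (Rle_lt_dec x1 2); auto.
    assert (wf k1 a x1 < wf k1 a x) by (apply (wf_decr k1 a 0 2); try lra; exact S1). lra. }
  assert (x1 < 4).
  { destruct (Rlt_le_dec x1 4); auto. exfalso.
    destruct (IVT_strict (fun t => wf k1 a t - wf k1 a x) 2 4) as [t [Ht Hft]]; try lra.
    - intros t _. apply continuity_pt_minus. apply wf_cont. apply continuity_pt_const. intros ? ?; auto.
    - assert (wf k1 a 2 < wf k1 a x) by (apply (wf_decr k1 a 0 2); try lra; exact S1). lra.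
    - replace 4 with (4 - 0) by ring. rewrite Refl1.
      assert (hf k1 a x < hf k1 a 0) by (apply hf1_decr; lra).
      assert (exp (4*a) > 0) by apply exp_pos.
      assert (H3 := F1 a x ltac:(lra) ltac:(lra)). nra.
    - apply (Q3 t). lra. lra. }
  set (z := 4 - x1).
  assert (E1 : exp (4*a) * hf k1 a z = wf k1 a x) by (unfold z; rewrite <- Refl1; replace (4 - (4 - x1)) with x1 by ring; auto).
  assert (Hzx : x < z).
  { destruct (Rlt_le_dec x z); auto. exfalso.
    assert (hf k1 a x <= hf k1 a z).
    { destruct r. left. apply hf1_decr; unfold z in *; lra. subst; right; auto. }
    assert (H3 := F1 a x ltac:(lra) ltac:(lra)). assert (exp (4*a) > 0) by apply exp_pos. nra. }
  assert (Hz1 : z < 1).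
  { destruct (Rlt_le_dec z 1); auto. exfalso.
    assert (hf k1 a z <= hf k1 a 1).
    { destruct r. left. apply hf1_decr; unfold z in *; lra. rewrite H1; right; auto. }
    assert (H3 := N3 a x ltac:(lra) ltac:(lra)). assert (exp (4*a) > 0) by apply exp_pos. nra. }
  assert (E2 : hf k2 a z = wf k2 a x).
  { rewrite Refl3 in T2. replace x1 with (4 - z) in T2 by (unfold z; ring). rewrite Refl2 in T2.
    assert (exp (4*a) > 0) by apply exp_pos.
    apply Rmult_eq_reg_l with (exp (4*a)); lra. }
  exists z. split; [split|split]; auto.
  destruct (Rlt_le_dec z (2/3)) as [h|h]; auto. exfalso.
  destruct h as [h|h].
  - destruct (IVT_strict (fun t => wf k2 a t - wf k2 a x1) (10/3) 4) as [t [Ht Hft]]; try lra.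
    + intros t _. apply continuity_pt_minus. apply wf_cont. apply continuity_pt_const. intros ? ?; auto.
    + assert (wf k2 a (10/3) < wf k2 a x1) by (apply (wf_decr k2 a (8/3) (10/3)); try (unfold z in *; lra); exact S5). lra.
    + replace 4 with (0 + 4) by ring. rewrite Refl3. rewrite <- T2, Refl3.
      assert (wf k2 a 0 = k2) by (unfold wf; rewrite !Rmult_0_r, exp_0, cos_0, sin_0; ring).
      assert (H3 := wf2_neg a x ltac:(lra) ltac:(lra)). assert (H4 := k2_pos).
      assert (exp (4*a) > 0) by apply exp_pos. nra.
    + apply (T3 t). unfold z in *; lra. lra.
  - assert (H3 := N1 a x ltac:(lra) ltac:(lra)). rewrite <- h in E2. lra.
Qed.

Lemma phi_deriv k a x z t : is_derive (fun t => exp (4*a) * hf k a (z+t) - wf k a (x+t)) t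
  (exp (4*a) * (-(a*a+k*k) * exp(-(a*(z+t))) * sin(k*(z+t))) - (-(a*a+k*k) * exp(a*(x+t)) * sin(k*(x+t)))).
Proof. unfold hf, wf. auto_derive; auto. ring. Qed.

Lemma psi_deriv k a x z t : is_derive (fun t => hf k a (z+t) - wf k a (x+t)) t
  ((-(a*a+k*k) * exp(-(a*(z+t))) * sin(k*(z+t))) - (-(a*a+k*k) * exp(a*(x+t)) * sin(k*(x+t)))).
Proof. unfold hf, wf. auto_derive; auto. ring. Qed.

Lemma uniq_root a x x' z z' : 0 < a -> 1/3 < x -> x < x' -> x' < 2/3 ->
  x < z < 2/3 -> x' < z' < 2/3 ->
  exp (4*a) * hf k1 a z = wf k1 a x -> hf k2 a z = wf k2 a x ->
  exp (4*a) * hf k1 a z' = wf k1 a x' -> hf k2 a z' = wf k2 a x' -> False.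
Proof.
  intros Ha Hx Hxx Hx' Hz Hz' E1 E2 E1' E2'.
  assert (H3 := PI_gt3). assert (H4 := PI_4).
  set (s := x' - x).
  assert (HA : z' < z + s).
  { destruct (Rlt_le_dec z' (z+s)) as [h|h]; auto. exfalso.
    set (F := fun t => exp (4*a) * hf k1 a (z+t) - wf k1 a (x+t)).
    assert (Hphi : F s < F 0).
    { apply (strict_decr F (fun t => exp (4*a) * (-(a*a+k1*k1) * exp(-(a*(z+t))) * sin(k1*(z+t))) - (-(a*a+k1*k1) * exp(a*(x+t)) * sin(k1*(x+t)))) 0 s). intros; apply phi_deriv.
      intros t Ht.
      assert (Hs1 : sin (k1*(x+t)) < sin (k1*(z+t))).
      { rewrite k1_eq. apply sin_increasing_1; unfold s in *; nra. }
      assert (Hs0 : sin (k1*(x+t)) > 0) by (apply S1; unfold s in *; lra).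
      assert (Hex : exp (a*(x+t)) <= exp (4*a) * exp (-(a*(z+t)))).
      { rewrite <- exp_plus. apply exp_le_exp. unfold s in *; nra. }
      assert (exp (a*(x+t)) > 0) by apply exp_pos.
      assert (K := k1_pos).
      assert (HD : exp (a*(x+t)) * sin (k1*(x+t)) < exp (4*a) * exp (-(a*(z+t))) * sin (k1*(z+t))) by nra.
      assert (HR : a*a+k1*k1 > 0) by nra.
      assert (HP := Rmult_lt_0_compat _ _ HR (proj2 (Rlt_0_minus _ _) HD)).
      match goal with |- ?L < 0 => replace L with (-((a*a+k1*k1) * (exp (4*a) * exp (-(a*(z+t))) * sin (k1*(z+t)) - exp (a*(x+t)) * sin (k1*(x+t))))) by ring end. lra. lra. unfold s; lra. lra. }
    unfold F in Hphi. rewrite !Rplus_0_r in Hphi. unfold s in Hphi.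
    replace (x + (x' - x)) with x' in Hphi by ring. rewrite <- E1', E1 in Hphi.
    assert (hf k1 a z' <= hf k1 a (z + (x'-x))).
    { destruct h as [h|h]. left; apply hf1_decr; unfold s in *; lra. unfold s in h; rewrite h; right; auto. }
    assert (exp (4*a) > 0) by apply exp_pos. nra. }
  destruct (Rle_lt_dec z' z) as [h|h].
  - assert (hf k2 a z <= hf k2 a z').
    { destruct h as [h|h]. left; apply hf2_decr; lra. subst; right; auto. }
    assert (wf k2 a x' < wf k2 a x) by (apply (wf_decr k2 a 0 (2/3)); try lra; exact S6).
    lra.
  - set (ts := z' - z).
    set (F := fun t => hf k2 a (z+t) - wf k2 a (x+t)).
    assert (Hpsi : F 0 < F ts).
    { apply (strict_incr F (fun t => (-(a*a+k2*k2) * exp(-(a*(z+t))) * sin(k2*(z+t))) - (-(a*a+k2*k2) * exp(a*(x+t)) * sin(k2*(x+t)))) 0 ts). intros; apply psi_deriv.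
      intros t Ht.
      assert (Hs1 : sin (k2*(z+t)) < sin (k2*(x+t))).
      { rewrite k2_eq. apply sin_decreasing_1; unfold s, ts in *; nra. }
      assert (Hs0 : sin (k2*(z+t)) > 0) by (apply S6; unfold s, ts in *; lra).
      assert (Hex : exp (-(a*(z+t))) <= exp (a*(x+t))).
      { apply exp_le_exp. unfold s, ts in *; nra. }
      assert (exp (-(a*(z+t))) > 0) by apply exp_pos.
      assert (K := k2_pos).
      assert (HD : exp (-(a*(z+t))) * sin (k2*(z+t)) < exp (a*(x+t)) * sin (k2*(x+t))) by nra.
      assert (HR : a*a+k2*k2 > 0) by nra.
      assert (HP := Rmult_lt_0_compat _ _ HR (proj2 (Rlt_0_minus _ _) HD)).
      match goal with |- ?L > 0 => replace L with (((a*a+k2*k2) * (exp (a*(x+t)) * sin (k2*(x+t)) - exp (-(a*(z+t))) * sin (k2*(z+t))))) by ring end. lra. lra. unfold ts; lra. lra. }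
    unfold F in Hpsi. rewrite !Rplus_0_r in Hpsi. unfold ts in Hpsi.
    replace (z + (z' - z)) with z' in Hpsi by ring. rewrite E2, E2' in Hpsi.
    assert (wf k2 a x' < wf k2 a (x + (z'-z))) by (apply (wf_decr k2 a 0 (2/3)); try (unfold s in *; lra); exact S6).
    lra.
Qed.

Definition ff x := 32 / (9 * PI) + (2 * x / 3) * cot (3 * PI * x / 2) + (4 - 2 * x) * cot (PI * x / 2).

Lemma cot_decr u v : 0 < u -> u < v -> v < PI -> cot v < cot u.
Proof.
  intros. unfold cot.
  assert (su : sin u > 0) by (apply sin_gt_0; lra).
  assert (sv : sin v > 0) by (apply sin_gt_0; lra).
  assert (sd : sin (v - u) > 0) by (apply sin_gt_0; lra).
  rewrite sin_minus in sd.
  apply Rminus_gt_0_lt. unfold Rdiv.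
  replace (cos u * / sin u - cos v * / sin v) with ((sin v * cos u - cos v * sin u) / (sin u * sin v)) by (field; lra).
  apply Rdiv_lt_0_compat; nra.
Qed.

Lemma ff_decr x y : 1/3 < x -> x < y -> y < 2/3 -> ff y < ff x.
Proof.
  intros. unfold ff. assert (H3 := PI_gt3).
  assert (A : cot (3*PI*y/2) < cot (3*PI*x/2)) by (apply cot_decr; nra).
  assert (B : cot (PI*y/2) < cot (PI*x/2)) by (apply cot_decr; nra).
  assert (Cx : cot (3*PI*x/2) < 0).
  { unfold cot. assert (sin (3*PI*x/2) > 0) by (apply sin_gt_0; nra).
    assert (cos (3*PI*x/2) < 0) by (apply cos_lt_0; nra).
    unfold Rdiv. assert (/ sin (3*PI*x/2) > 0) by (apply Rinv_0_lt_compat; lra). nra. }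
  assert (Cy : cot (PI*y/2) > 0).
  { unfold cot. assert (sin (PI*y/2) > 0) by (apply sin_gt_0; nra).
    assert (cos (PI*y/2) > 0) by (apply cos_gt_0; nra).
    unfold Rdiv. assert (/ sin (PI*y/2) > 0) by (apply Rinv_0_lt_compat; lra). nra. }
  nra.
Qed.

Lemma ff_cont x : 1/3 < x < 2/3 -> continuity_pt ff x.
Proof.
  intros Hx. assert (H3 := PI_gt3).
  assert (s1 : sin (3*PI*x/2) <> 0) by (apply Rgt_not_eq, sin_gt_0; nra).
  assert (s2 : sin (PI*x/2) <> 0) by (apply Rgt_not_eq, sin_gt_0; nra).
  apply continuity_pt_filterlim.
  apply (ex_derive_continuous (K := R_AbsRing) (V := R_NormedModule)).
  unfold ff, cot. auto_derive. repeat split; auto.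
Qed.

Lemma ff_half : ff (1/2) > 0.
Proof.
  unfold ff, cot. assert (H3 := PI_gt3).
  replace (3 * PI * (1/2) / 2) with (PI - PI/4) by field.
  replace (PI * (1/2) / 2) with (PI/4) by field.
  rewrite cos_PI_minus, sin_PI_x, cos_PI4, sin_PI4.
  assert (sqrt 2 > 0) by (apply sqrt_lt_R0; lra).
  assert (32 / (9*PI) > 0) by (apply Rdiv_lt_0_compat; lra).
  replace (- (1 / sqrt 2) / (1 / sqrt 2)) with (-1) by (field; lra).
  replace ((1 / sqrt 2) / (1 / sqrt 2)) with 1 by (field; lra). lra.
Qed.

Lemma ff_end : ff (13/20) < 0.
Proof.
  unfold ff. assert (H3 := PI_gt3). assert (H4 := PI_4).
  replace (3 * PI * (13/20) / 2) with (PI - PI/40) by field.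
  assert (C1 : cot (PI - PI/40) <= - (995/100)).
  { unfold cot. rewrite cos_PI_minus, sin_PI_x.
    assert (sin (PI/40) < PI/40) by (apply sin_lt_x; lra).
    assert (sin (PI/40) > 0) by (apply sin_gt_0; lra).
    destruct cos_u_bounds as [cl _].
    assert (cos (PI/40) >= 995/1000) by nra.
    apply Rmult_le_reg_r with (sin (PI/40)). lra.
    unfold Rdiv. rewrite Rmult_assoc, Rinv_l by lra. nra. }
  assert (C2 : cot (PI * (13/20) / 2) <= 1).
  { assert (cot (PI * (13/20)/2) < cot (PI/4)) by (apply cot_decr; lra).
    unfold cot at 2 in H. rewrite cos_PI4, sin_PI4 in H.
    assert (sqrt 2 > 0) by (apply sqrt_lt_R0; lra).
    replace ((1 / sqrt 2) / (1 / sqrt 2)) with 1 in H by (field; lra). lra. }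
  assert (32 / (9*PI) < 32/27).
  { apply Rmult_lt_compat_l. lra. apply Rinv_lt_contravar; nra. }
  nra.
Qed.
Lemma E1_deriv x c : is_derive (fun a => exp (4*a) * hf k1 a (x + a*c) - wf k1 a x) 0
  (k1 * cos (k1*x) * (4 - 2*x) + 2 * sin (k1*x) - k1*k1 * sin (k1*x) * c).
Proof.
  unfold hf, wf. auto_derive; auto.
  repeat rewrite ?Rmult_0_l, ?Rmult_0_r, ?Rplus_0_r, ?Rplus_0_l, ?Ropp_0, ?exp_0, ?Rminus_0_r.
  ring.
Qed.
Lemma E2_deriv x c : is_derive (fun a => hf k2 a (x + a*c) - wf k2 a x) 0
  (-2 * x * k2 * cos (k2*x) + 2 * sin (k2*x) - k2*k2 * sin (k2*x) * c).
Proof.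
  unfold hf, wf. auto_derive; auto.
  repeat rewrite ?Rmult_0_l, ?Rmult_0_r, ?Rplus_0_r, ?Rplus_0_l, ?Ropp_0, ?exp_0, ?Rminus_0_r.
  ring.
Qed.

Lemma deriv_pos_right E l : is_derive E 0 l -> E 0 = 0 -> l > 0 ->
  exists d, d > 0 /\ forall a, 0 < a < d -> E a > 0.
Proof.
  intros H H0 Hl. apply is_derive_Reals in H.
  destruct (H l Hl) as [d Hd]. exists d. split. apply cond_pos.
  intros a Ha. assert (K := Hd a ltac:(lra) ltac:(rewrite Rabs_right; lra)).
  rewrite Rplus_0_l, H0, Rminus_0_r in K.
  apply Rabs_def2 in K. destruct K as [K1 K2].
  assert (E a / a > 0) by lra.
  apply Rmult_lt_reg_r with (/a). apply Rinv_0_lt_compat; lra. rewrite Rmult_0_l. exact H1.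
Qed.

Lemma deriv_neg_right E l : is_derive E 0 l -> E 0 = 0 -> l < 0 ->
  exists d, d > 0 /\ forall a, 0 < a < d -> E a < 0.
Proof.
  intros H H0 Hl.
  destruct (deriv_pos_right (fun a => - E a) (-l)) as [d [Hd1 Hd2]].
  - exact (is_derive_opp E 0 l H).
  - simpl. rewrite H0; ring.
  - lra.
  - 
exists d; split; auto. intros a Ha. specialize (Hd2 a Ha). lra.
Qed.

Definition g1 x a z := exp (4*a) * hf k1 a z - wf k1 a x.
Definition g2 x a z := hf k2 a z - wf k2 a x.
Definition Z1 x a := epsilon (inhabits 0) (fun z => 1/3 < z < 1 /\ g1 x a z = 0).
Definition Z2 x a := epsilon (inhabits 0) (fun z => 1/3 < z < 2/3 /\ g2 x a z = 0).
Definition Qf x a := Z1 x a - Z2 x a.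
Definition Gd x a := 0 < a <= 1/1000 /\ 1/2 <= x <= 13/20.

Lemma hf_cont k a t : continuity_pt (hf k a) t.
Proof. eapply cont_of_deriv. apply hf_deriv. Qed.

Lemma g1_decr x a y y' : 1/3 <= y -> y < y' -> y' <= 1 -> g1 x a y' < g1 x a y.
Proof. intros. unfold g1. assert (hf k1 a y' < hf k1 a y) by (apply hf1_decr; lra).
  assert (exp (4*a) > 0) by apply exp_pos. nra. Qed.
Lemma g2_decr x a y y' : 1/3 <= y -> y < y' -> y' <= 2/3 -> g2 x a y' < g2 x a y.
Proof. intros. unfold g2. assert (hf k2 a y' < hf k2 a y) by (apply hf2_decr; lra). lra. Qed.

Lemma hf2_third a : hf k2 a (1/3) = a * exp (-(a*(1/3))).
Proof. unfold hf. rewrite k2_eq. replace (3*PI/2*(1/3)) with (PI/2) by field.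
  rewrite cos_PI2, sin_PI2. ring. Qed.

Lemma Z1_spec x a : Gd x a -> 1/3 < Z1 x a < 1 /\ g1 x a (Z1 x a) = 0.
Proof.
  intros [Ha Hx]. unfold Z1. apply epsilon_spec.
  destruct (IVT_strict (fun z => - g1 x a z) (1/3) 1) as [t [Ht Hf]]; try lra.
  - intros t _. apply continuity_pt_opp. unfold g1. apply continuity_pt_minus.
    apply continuity_pt_mult. apply continuity_pt_const; intros ? ?; auto. apply hf_cont.
    apply continuity_pt_const; intros ? ?; auto.
  - assert (g1 x a x < g1 x a (1/3)) by (apply g1_decr; lra).
    assert (HF := F1 a x ltac:(lra) ltac:(lra)). unfold g1 in *. lra.
  - assert (HN := N3 a x ltac:(lra) ltac:(lra)). unfold g1. lra.
  - exists t. split; auto. lra.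
Qed.

Lemma Z2_spec x a : Gd x a -> 1/3 < Z2 x a < 2/3 /\ g2 x a (Z2 x a) = 0.
Proof.
  intros [Ha Hx]. unfold Z2. apply epsilon_spec.
  destruct (IVT_strict (fun z => - g2 x a z) (1/3) (2/3)) as [t [Ht Hf]]; try lra.
  - intros t _. apply continuity_pt_opp. unfold g2. apply continuity_pt_minus.
    apply hf_cont. apply continuity_pt_const; intros ? ?; auto.
  - unfold g2. rewrite hf2_third. assert (HW := wf2_neg a x ltac:(lra) ltac:(lra)).
    assert (exp (-(a*(1/3))) > 0) by apply exp_pos. nra.
  - assert (HN := N1 a x ltac:(lra) ltac:(lra)). unfold g2. lra.
  - exists t. split; auto. lra.
Qed.

Lemma Z1_uniq x a z : Gd x a -> 1/3 < z < 1 -> g1 x a z = 0 -> Z1 x a = z.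
Proof.
  intros HG Hz Hg. destruct (Z1_spec x a HG) as [H1 H2].
  destruct (Rtotal_order (Z1 x a) z) as [h|[h|h]]; auto; exfalso.
  - assert (g1 x a z < g1 x a (Z1 x a)) by (apply g1_decr; lra). lra.
  - assert (g1 x a (Z1 x a) < g1 x a z) by (apply g1_decr; lra). lra.
Qed.

Lemma Z2_uniq x a z : Gd x a -> 1/3 < z < 2/3 -> g2 x a z = 0 -> Z2 x a = z.
Proof.
  intros HG Hz Hg. destruct (Z2_spec x a HG) as [H1 H2].
  destruct (Rtotal_order (Z2 x a) z) as [h|[h|h]]; auto; exfalso.
  - assert (g2 x a z < g2 x a (Z2 x a)) by (apply g2_decr; lra). lra.
  - assert (g2 x a (Z2 x a) < g2 x a z) by (apply g2_decr; lra). lra.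
Qed.

Lemma Q_zero_Delta x a : Gd x a -> Qf x a = 0 -> Delta_root x a.
Proof.
  intros HG HQ. destruct (Z1_spec x a HG) as [A1 A2]. destruct (Z2_spec x a HG) as [B1 B2].
  unfold Qf in HQ. destruct HG as [Ha Hx].
  apply (root_to_Delta a x (Z2 x a)); try lra.
  - unfold g1 in A2. replace (Z2 x a) with (Z1 x a) by lra. lra.
  - unfold g2 in B2. lra.
Qed.

Lemma Delta_Q_zero x a : Gd x a -> Delta_root x a -> Qf x a = 0.
Proof.
  intros HG HD. destruct (Delta_to_root a x) as [z [Hz [E1 E2]]]; try apply HG; auto.
  destruct HG as [Ha Hx].
  unfold Qf. rewrite (Z1_uniq x a z), (Z2_uniq x a z); try split; try lra; unfold g1, g2; lra.
Qed.

Lemma Delta_uniq a x x' : Gd x a -> Gd x' a -> Delta_root x a -> Delta_root x' a -> x = x'.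
Proof.
  intros HG HG' HD HD'.
  destruct (Delta_to_root a x) as [z [Hz [E1 E2]]]; try apply HG; auto.
  destruct (Delta_to_root a x') as [z' [Hz' [E1' E2']]]; try apply HG'; auto.
  destruct HG as [Ha Hx]. destruct HG' as [_ Hx'].
  destruct (Rtotal_order x x') as [h|[h|h]]; auto; exfalso.
  - apply (uniq_root a x x' z z'); auto; lra.
  - apply (uniq_root a x' x z' z); auto; lra.
Qed.

Lemma cont_eps f x : continuity_pt f x -> forall eps, eps > 0 ->
  exists d, d > 0 /\ forall y, Rabs (y - x) < d -> Rabs (f y - f x) < eps.
Proof.
  intros H eps He. destruct (H eps He) as [d [Hd Hd2]]. exists d. split; auto.
  intros y Hy. destruct (Req_dec y x) as [->|Hn]. rewrite Rminus_diag, Rabs_R0; auto.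
  apply (Hd2 y). split; [split; [exact I | auto] | exact Hy].
Qed.

Lemma eps_cont f x : (forall eps, eps > 0 ->
  exists d, d > 0 /\ forall y, Rabs (y - x) < d -> Rabs (f y - f x) < eps) -> continuity_pt f x.
Proof.
  intros H eps He. destruct (H eps He) as [d [Hd Hd2]]. exists d. split; auto.
  intros y [_ Hy]. apply Hd2. exact Hy.
Qed.

Lemma root_cont (G : R -> R -> R) (Z : R -> R) (l u : R) (P : R -> Prop) s0 :
  (exists rho, rho > 0 /\ forall s, Rabs (s - s0) < rho -> P s) ->
  (forall s, P s -> l < Z s < u /\ G s (Z s) = 0) ->
  (forall s, P s -> forall y y', l <= y -> y < y' -> y' <= u -> G s y' < G s y) ->
  (forall y, l <= y <= u -> continuity_pt (fun s => G s y) s0) ->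
  continuity_pt Z s0.
Proof.
  intros [rho [Hrho HP]] HZ HD HC. apply eps_cont. intros eps Heps.
  assert (P0 : P s0) by (apply HP; rewrite Rminus_diag, Rabs_R0; lra).
  destruct (HZ s0 P0) as [Hr Hr0]. set (r := Z s0) in *.
  set (e := Rmin eps (Rmin (r - l) (u - r)) / 2).
  assert (He : 0 < e /\ e < eps /\ e < r - l /\ e < u - r).
  { unfold e. repeat split; try (apply Rmin_glb_lt || idtac);
    unfold Rmin; repeat destruct Rle_dec; lra. }
  assert (G1 : G s0 (r - e) > 0) by (rewrite <- Hr0; apply HD; auto; lra).
  assert (G2 : G s0 (r + e) < 0) by (rewrite <- Hr0; apply HD; auto; lra).
  destruct (cont_eps _ _ (HC (r - e) ltac:(lra)) _ G1) as [d1 [Hd1 K1]].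
  destruct (cont_eps _ _ (HC (r + e) ltac:(lra)) (- G s0 (r+e)) ltac:(lra)) as [d2 [Hd2 K2]].
  exists (Rmin rho (Rmin d1 d2)). split. unfold Rmin; repeat destruct Rle_dec; lra.
  intros s Hs.
  assert (Hs1 : Rabs (s - s0) < rho) by (unfold Rmin in Hs; repeat destruct Rle_dec; lra).
  assert (Hs2 : Rabs (s - s0) < d1) by (unfold Rmin in Hs; repeat destruct Rle_dec; lra).
  assert (Hs3 : Rabs (s - s0) < d2) by (unfold Rmin in Hs; repeat destruct Rle_dec; lra).
  specialize (K1 s Hs2). specialize (K2 s Hs3).
  apply Rabs_def2 in K1. apply Rabs_def2 in K2. simpl in K1, K2.
  assert (Ps := HP s Hs1). destruct (HZ s Ps) as [Hzs Hzs0].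
  apply Rabs_def1.
  - destruct (Rlt_le_dec (Z s - r) e) as [h|h]. lra. exfalso.
    destruct h as [h|h].
    + assert (G s (Z s) < G s (r + e)) by (apply HD; auto; lra). lra.
    + replace (Z s) with (r + e) in Hzs0 by lra. lra.
  - destruct (Rlt_le_dec (-e) (Z s - r)) as [h|h]. lra. exfalso.
    destruct h as [h|h].
    + assert (G s (r - e) < G s (Z s)) by (apply HD; auto; lra). lra.
    + replace (Z s) with (r - e) in Hzs0 by lra. lra.
Qed.

Lemma cont_ex f t : ex_derive f t -> continuity_pt f t.
Proof. intros [df H]. eapply cont_of_deriv; eauto. Qed.

Lemma Q_cont_x x0 a : 1/2 < x0 < 13/20 -> 0 < a <= 1/1000 -> continuity_pt (fun x => Qf x a) x0.
Proof.
  intros Hx Ha. unfold Qf. apply continuity_pt_minus.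
  - apply (root_cont (fun s y => g1 s a y) (fun s => Z1 s a) (1/3) 1 (fun s => Gd s a)).
    + exists (Rmin (x0 - 1/2) (13/20 - x0)). split. unfold Rmin; destruct Rle_dec; lra.
      intros s Hs. unfold Rmin in Hs. apply Rabs_def2 in Hs. split; auto. destruct Rle_dec; lra.
    + intros s Hs. apply Z1_spec; auto.
    + intros s Hs y y' ? ? ?. apply g1_decr; auto.
    + intros y _. apply cont_ex. unfold g1, wf. auto_derive. auto.
  - apply (root_cont (fun s y => g2 s a y) (fun s => Z2 s a) (1/3) (2/3) (fun s => Gd s a)).
    + exists (Rmin (x0 - 1/2) (13/20 - x0)). split. unfold Rmin; destruct Rle_dec; lra.
      intros s Hs. unfold Rmin in Hs. apply Rabs_def2 in Hs. split; auto. destruct Rle_dec; lra.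
    + intros s Hs. apply Z2_spec; auto.
    + intros s Hs y y' ? ? ?. apply g2_decr; auto.
    + intros y _. apply cont_ex. unfold g2, wf. auto_derive. auto.
Qed.

Lemma Q_cont_a x a0 : 1/2 <= x <= 13/20 -> 0 < a0 < 1/1000 -> continuity_pt (fun a => Qf x a) a0.
Proof.
  intros Hx Ha. unfold Qf. apply continuity_pt_minus.
  - apply (root_cont (fun s y => g1 x s y) (fun s => Z1 x s) (1/3) 1 (fun s => Gd x s)).
    + exists (Rmin a0 (1/1000 - a0)). split. unfold Rmin; destruct Rle_dec; lra.
      intros s Hs. unfold Rmin in Hs. apply Rabs_def2 in Hs. split; auto. destruct Rle_dec; lra.
    + intros s Hs. apply Z1_spec; auto.
    + intros s Hs y y' ? ? ?. apply g1_decr; auto.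
    + intros y _. apply cont_ex. unfold g1, wf, hf. auto_derive. auto.
  - apply (root_cont (fun s y => g2 x s y) (fun s => Z2 x s) (1/3) (2/3) (fun s => Gd x s)).
    + exists (Rmin a0 (1/1000 - a0)). split. unfold Rmin; destruct Rle_dec; lra.
      intros s Hs. unfold Rmin in Hs. apply Rabs_def2 in Hs. split; auto. destruct Rle_dec; lra.
    + intros s Hs. apply Z2_spec; auto.
    + intros s Hs y y' ? ? ?. apply g2_decr; auto.
    + intros y _. apply cont_ex. unfold g2, wf, hf. auto_derive. auto.
Qed.

Lemma E0_1 x c : exp (4*0) * hf k1 0 (x + 0*c) - wf k1 0 x = 0.
Proof. unfold hf, wf. replace (x + 0*c) with x by ring. rewrite !Rmult_0_r, !Rmult_0_l, Ropp_0, exp_0. ring. Qed.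
Lemma E0_2 x c : hf k2 0 (x + 0*c) - wf k2 0 x = 0.
Proof. unfold hf, wf. replace (x + 0*c) with x by ring. rewrite !Rmult_0_l, Ropp_0, exp_0. ring. Qed.

Definition v1 x := (k1 * cos (k1*x) * (4 - 2*x) + 2 * sin (k1*x)) / (k1*k1*sin (k1*x)).
Definition v2 x := (2 * sin (k2*x) - 2 * x * k2 * cos (k2*x)) / (k2*k2*sin (k2*x)).

Lemma v_diff x : 1/3 < x < 2/3 -> v1 x - v2 x = 2 / PI * ff x.
Proof.
  intros Hx. assert (H3 := PI_gt3).
  assert (s1 : sin (k1*x) > 0) by (apply S1; lra).
  assert (s2 : sin (k2*x) > 0) by (apply S6; lra).
  unfold v1, v2, ff, cot.
  replace (3 * PI * x / 2) with (k2*x) by (rewrite k2_eq; field).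
  replace (PI * x / 2) with (k1*x) by (rewrite k1_eq; field).
  rewrite k1_eq, k2_eq in *. field. lra.
Qed.

Lemma Q_sign x : 1/2 < x < 13/20 -> ff x <> 0 ->
  exists d, d > 0 /\ forall a, 0 < a < d -> Gd x a /\ (ff x > 0 -> Qf x a > 0) /\ (ff x < 0 -> Qf x a < 0).
Proof.
  intros Hx Hf. assert (H3 := PI_gt3).
  assert (s1 : sin (k1*x) > 0) by (apply S1; lra).
  assert (s2 : sin (k2*x) > 0) by (apply S6; lra).
  assert (K1 := k1_pos). assert (K2 := k2_pos).
  assert (HV := v_diff x ltac:(lra)).
  set (c := (v1 x + v2 x) / 2).
  assert (HD1 : k1 * cos (k1*x) * (4 - 2*x) + 2 * sin (k1*x) - k1*k1 * sin (k1*x) * c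
                = k1*k1*sin(k1*x) * (v1 x - c)) by (unfold v1; field; nra).
  assert (HD2 : -2 * x * k2 * cos (k2*x) + 2 * sin (k2*x) - k2*k2 * sin (k2*x) * c
                = k2*k2*sin(k2*x) * (v2 x - c)) by (unfold v2; field; nra).
  assert (P1 : k1*k1*sin(k1*x) > 0) by (apply Rmult_lt_0_compat; nra).
  assert (P2 : k2*k2*sin(k2*x) > 0) by (apply Rmult_lt_0_compat; nra).
  assert (Hpi : 2 / PI > 0) by (apply Rdiv_lt_0_compat; lra).
  set (m := Rmin (x - 1/3) (2/3 - x)).
  assert (Hm : 0 < m /\ m <= x - 1/3 /\ m <= 2/3 - x) by (unfold m, Rmin; destruct Rle_dec; lra).
  set (d3 := m / (Rabs c + 1)).
  assert (Hd3 : d3 > 0) by (unfold d3; apply Rdiv_lt_0_compat; [lra| generalize (Rabs_pos c); lra]).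
  assert (Hy : forall a, 0 < a < d3 -> 1/3 < x + a * c < 2/3).
  { intros a Ha. assert (Rabs (a*c) < m).
    { rewrite Rabs_mult, (Rabs_right a) by lra.
      assert (a * (Rabs c + 1) < m).
      { unfold d3 in Ha. destruct Ha as [Ha1 Ha2].
        apply Rmult_lt_compat_r with (r := Rabs c + 1) in Ha2; [|generalize (Rabs_pos c); lra].
        unfold Rdiv in Ha2. rewrite Rmult_assoc, Rinv_l in Ha2 by (generalize (Rabs_pos c); lra). lra. }
      generalize (Rabs_pos c); nra. }
    apply Rabs_def2 in H. lra. }
  destruct (Rdichotomy _ _ Hf) as [Hneg|Hpos].
  -
    assert (Hv : v1 x < v2 x) by nra.
    destruct (deriv_neg_right _ _ (E1_deriv x c) (E0_1 x c)) as [d1 [Hd1 K1']].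
    { rewrite HD1. unfold c. nra. }
    destruct (deriv_pos_right _ _ (E2_deriv x c) (E0_2 x c)) as [d2 [Hd2 K2']].
    { rewrite HD2. unfold c. nra. }
    exists (Rmin (Rmin d1 d2) (Rmin d3 (1/1000))). split.
    { unfold Rmin; repeat destruct Rle_dec; lra. }
    intros a Ha.
    assert (a < d1 /\ a < d2 /\ a < d3 /\ a < 1/1000) as [A1 [A2 [A3 A4]]] by (unfold Rmin in Ha; repeat destruct Rle_dec; lra).
    assert (HG : Gd x a) by (split; lra).
    split; auto. split; intros; [lra|].
    specialize (K1' a ltac:(lra)). specialize (K2' a ltac:(lra)). cbv beta in K1', K2'.
    specialize (Hy a ltac:(lra)).
    destruct (Z1_spec x a HG) as [Z1a Z1b]. destruct (Z2_spec x a HG) as [Z2a Z2b].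
    assert (Z1 x a < x + a*c).
    { destruct (Rlt_le_dec (Z1 x a) (x + a*c)) as [h|h]; auto. exfalso.
      destruct h as [h|h].
      - assert (g1 x a (Z1 x a) < g1 x a (x + a*c)) by (apply g1_decr; lra). unfold g1 in *. lra.
      - assert (g1 x a (x+a*c) = 0) by (first [rewrite h; auto | rewrite <- h; auto]). unfold g1 in *. lra. }
    assert (x + a*c < Z2 x a).
    { destruct (Rlt_le_dec (x + a*c) (Z2 x a)) as [h|h]; auto. exfalso.
      destruct h as [h|h].
      - assert (g2 x a (x + a*c) < g2 x a (Z2 x a)) by (apply g2_decr; lra). unfold g2 in *. lra.
      - assert (g2 x a (x+a*c) = 0) by (first [rewrite h; auto | rewrite <- h; auto]). unfold g2 in *. lra. }
    unfold Qf; lra.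
  - assert (Hv : v2 x < v1 x) by nra.
    destruct (deriv_pos_right _ _ (E1_deriv x c) (E0_1 x c)) as [d1 [Hd1 K1']].
    { rewrite HD1. unfold c. nra. }
    destruct (deriv_neg_right _ _ (E2_deriv x c) (E0_2 x c)) as [d2 [Hd2 K2']].
    { rewrite HD2. unfold c. nra. }
    exists (Rmin (Rmin d1 d2) (Rmin d3 (1/1000))). split.
    { unfold Rmin; repeat destruct Rle_dec; lra. }
    intros a Ha.
    assert (a < d1 /\ a < d2 /\ a < d3 /\ a < 1/1000) as [A1 [A2 [A3 A4]]] by (unfold Rmin in Ha; repeat destruct Rle_dec; lra).
    assert (HG : Gd x a) by (split; lra).
    split; auto. split; intros; [|lra].
    specialize (K1' a ltac:(lra)). specialize (K2' a ltac:(lra)). cbv beta in K1', K2'.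
    specialize (Hy a ltac:(lra)).
    destruct (Z1_spec x a HG) as [Z1a Z1b]. destruct (Z2_spec x a HG) as [Z2a Z2b].
    assert (x + a*c < Z1 x a).
    { destruct (Rlt_le_dec (x + a*c) (Z1 x a)) as [h|h]; auto. exfalso.
      destruct h as [h|h].
      - assert (g1 x a (x + a*c) < g1 x a (Z1 x a)) by (apply g1_decr; lra). unfold g1 in *. lra.
      - assert (g1 x a (x+a*c) = 0) by (first [rewrite h; auto | rewrite <- h; auto]). unfold g1 in *. lra. }
    assert (Z2 x a < x + a*c).
    { destruct (Rlt_le_dec (Z2 x a) (x + a*c)) as [h|h]; auto. exfalso.
      destruct h as [h|h].
      - assert (g2 x a (Z2 x a) < g2 x a (x + a*c)) by (apply g2_decr; lra). unfold g2 in *. lra.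
      - assert (g2 x a (x+a*c) = 0) by (first [rewrite h; auto | rewrite <- h; auto]). unfold g2 in *. lra. }
    unfold Qf; lra.
Qed.

Lemma Q_root_between a l u : 0 < a < 1/1000 -> 1/2 < l -> l < u -> u < 13/20 ->
  Qf l a > 0 -> Qf u a < 0 -> exists r, l < r < u /\ Qf r a = 0.
Proof.
  intros Ha Hl Hlu Hu Q1 Q2.
  destruct (IVT_strict (fun x => - Qf x a) l u) as [r [Hr Hf]]; try lra.
  - intros t Ht. apply continuity_pt_opp. apply Q_cont_x; lra.
  - exists r. split; auto. lra.
Qed.

Theorem lemma2 :
  exists (al : R) (x0 : R) (xf : R -> R),
    0 < al /\
    in_Iminus x0 /\ x0_equation x0 /\
    xf 0 = x0 /\
    (forall eps, 0 < eps -> exists del, 0 < del /\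
        forall a, 0 < a < del -> Rabs (xf a - x0) < eps) /\
    (forall a, 0 < a < al -> continuity_pt xf a) /\
    (forall a, 0 < a < al -> in_Iminus (xf a) /\ Delta_root (xf a) a) /\
    (exists del, 0 < del /\
       forall a x, 0 < a < al -> Rabs (x - x0) < del -> Delta_root x a ->
         x = xf a).
Proof.
  destruct (IVT_strict (fun x => - ff x) (1/2) (13/20)) as [x0 [Hx0 Hf0]]; try lra.
  { intros t Ht. apply continuity_pt_opp. apply ff_cont; lra. }
  { generalize ff_half; lra. }
  { generalize ff_end; lra. }
  assert (Hff0 : ff x0 = 0) by lra. clear Hf0.
  set (e0 := Rmin (x0 - 1/2) (13/20 - x0) / 2).
  assert (He0 : 0 < e0 /\ 1/2 < x0 - e0 /\ x0 + e0 < 13/20)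
    by (unfold e0, Rmin; destruct Rle_dec; lra).
  assert (Fl : ff (x0 - e0) > 0) by (rewrite <- Hff0; apply ff_decr; lra).
  assert (Fu : ff (x0 + e0) < 0) by (rewrite <- Hff0; apply ff_decr; lra).
  destruct (Q_sign (x0 - e0) ltac:(lra) ltac:(lra)) as [dl [Hdl Kl]].
  destruct (Q_sign (x0 + e0) ltac:(lra) ltac:(lra)) as [du [Hdu Ku]].
  set (al := Rmin (Rmin dl du) (1/1000)).
  assert (Hal : 0 < al /\ al <= dl /\ al <= du /\ al <= 1/1000)
    by (unfold al, Rmin; repeat destruct Rle_dec; lra).
  set (P := fun a x => x0 - e0 < x < x0 + e0 /\ Qf x a = 0).
  set (xf := fun a => if Rle_dec a 0 then x0 else epsilon (inhabits 0) (P a)).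
  assert (Hxf : forall a, 0 < a < al -> P a (xf a)).
  { intros a Ha. unfold xf. destruct Rle_dec. lra. apply epsilon_spec.
    destruct (Kl a ltac:(lra)) as [_ [K _]]. destruct (Ku a ltac:(lra)) as [_ [_ K']].
    specialize (K Fl). specialize (K' Fu).
    destruct (Q_root_between a (x0 - e0) (x0 + e0)) as [r [Hr Qr]]; try lra.
    exists r; split; auto. }
  assert (Huniq : forall a x, 0 < a < al -> 1/2 <= x <= 13/20 -> Delta_root x a -> x = xf a).
  { intros a x Ha Hx HD. destruct (Hxf a Ha) as [H1 H2].
    apply (Delta_uniq a); auto. split; lra. split; lra.
    apply Q_zero_Delta; auto. split; lra. }
  assert (HQu : forall a x, 0 < a < al -> x0 - e0 <= x <= x0 + e0 -> Qf x a = 0 -> x = xf a).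
  { intros a x Ha Hx HQ. apply Huniq; auto. lra. apply Q_zero_Delta; auto. split; lra. }
  exists al, x0, xf. split; [lra|]. split; [unfold in_Iminus; lra|].
  split; [exact Hff0|]. split; [unfold xf; destruct Rle_dec; lra|].
  split.
  {
    intros eps Heps. set (e := Rmin eps e0 / 2).
    assert (He : 0 < e /\ e < eps /\ e < e0) by (unfold e, Rmin; destruct Rle_dec; lra).
    assert (F1' : ff (x0 - e) > 0) by (rewrite <- Hff0; apply ff_decr; lra).
    assert (F2' : ff (x0 + e) < 0) by (rewrite <- Hff0; apply ff_decr; lra).
    destruct (Q_sign (x0 - e) ltac:(lra) ltac:(lra)) as [d1 [Hd1 K1]].
    destruct (Q_sign (x0 + e) ltac:(lra) ltac:(lra)) as [d2 [Hd2 K2]].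
    exists (Rmin (Rmin d1 d2) al). split. unfold Rmin; repeat destruct Rle_dec; lra.
    intros a Ha.
    assert (a < d1 /\ a < d2 /\ a < al) as [A1 [A2 A3]] by (unfold Rmin in Ha; repeat destruct Rle_dec; lra).
    destruct (K1 a ltac:(lra)) as [_ [K1' _]]. destruct (K2 a ltac:(lra)) as [_ [_ K2']].
    specialize (K1' F1'). specialize (K2' F2').
    destruct (Q_root_between a (x0 - e) (x0 + e)) as [r [Hr Qr]]; try lra.
    rewrite <- (HQu a r); try lra. apply Rabs_def1; lra. }
  split.
  {
    intros a Ha. apply eps_cont. intros eps Heps.
    destruct (Hxf a Ha) as [Hr Qr]. set (r := xf a) in *.
    set (e := Rmin eps (Rmin (r - (x0 - e0)) (x0 + e0 - r)) / 2).
    assert (He : 0 < e /\ e < eps /\ e < r - (x0 - e0) /\ e < x0 + e0 - r)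
      by (unfold e, Rmin; repeat destruct Rle_dec; lra).
    destruct (Kl a ltac:(lra)) as [_ [QL _]]. destruct (Ku a ltac:(lra)) as [_ [_ QU]].
    specialize (QL Fl). specialize (QU Fu).
    assert (Q1 : Qf (r - e) a > 0).
    { destruct (Rlt_le_dec 0 (Qf (r - e) a)) as [h|h]; auto. exfalso. destruct h as [h|h].
      - destruct (Q_root_between a (x0 - e0) (r - e)) as [r' [Hr' Qr']]; try lra.
        assert (r' = r) by (unfold r; apply HQu; auto; lra). lra.
      - assert (r - e = r) by (unfold r at 2; apply HQu; auto; lra). lra. }
    assert (Q2 : Qf (r + e) a < 0).
    { destruct (Rlt_le_dec (Qf (r + e) a) 0) as [h|h]; auto. exfalso. destruct h as [h|h].
      - destruct (Q_root_between a (r + e) (x0 + e0)) as [r' [Hr' Qr']]; try lra.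
        assert (r' = r) by (unfold r; apply HQu; auto; lra). lra.
      - assert (r + e = r) by (unfold r at 2; apply HQu; auto; lra). lra. }
    destruct (cont_eps _ _ (Q_cont_a (r - e) a ltac:(lra) ltac:(lra)) _ Q1) as [d1 [Hd1 C1]].
    destruct (cont_eps _ _ (Q_cont_a (r + e) a ltac:(lra) ltac:(lra)) (- Qf (r+e) a) ltac:(lra)) as [d2 [Hd2 C2]].
    exists (Rmin (Rmin d1 d2) (Rmin a (al - a))). split. unfold Rmin; repeat destruct Rle_dec; lra.
    intros a' Ha'.
    assert (Rabs (a' - a) < d1 /\ Rabs (a' - a) < d2 /\ Rabs (a' - a) < a /\ Rabs (a' - a) < al - a)
      as [B1 [B2 [B3 B4]]] by (unfold Rmin in Ha'; repeat destruct Rle_dec; lra).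
    specialize (C1 a' B1). specialize (C2 a' B2).
    apply Rabs_def2 in C1. apply Rabs_def2 in C2. apply Rabs_def2 in B3. apply Rabs_def2 in B4.
    destruct (Q_root_between a' (r - e) (r + e)) as [r' [Hr' Qr']]; try lra.
    rewrite <- (HQu a' r'); try lra. apply Rabs_def1; lra. }
  split.
  { intros a Ha. destruct (Hxf a Ha) as [H1 H2]. split. unfold in_Iminus; lra.
    apply Q_zero_Delta; auto. split; lra. }
  exists e0. split; [lra|]. intros a x Ha Hx HD.
  apply Rabs_def2 in Hx. apply Huniq; auto. lra.
Qed.
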